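(* Let $n\ge 2$ and let $S=[A_0,\dots,A_n]$ be an $n$-pre-kite. If the circumcenter and the incenter of $S$ coincide, then $S$ is a regular $n$-simplex.
   Context: An $n$-simplex is the convex hull of $n+1$ affinely independent points in a Euclidean space. It is an $n$-pre-kite if one of its facets (the $(n-1)$-simplex obtained by deleting one vertex) is a regular $(n-1)$-simplex, i.e. has all edges of equal length. The circumcenter of $S$ is the center of the $(n-1)$-sphere in the affine hull of $S$ passing through all vertices; the incenter is the center of the $(n-1)$-sphere in the affine hull of $S$ touching every facet at a point of that facet's convex hull. $S$ is regular if all its edges have the same length. *)

(* Defs.v *)
From HB Require Import structures.
From mathcomp Require Import all_boot all_order all_algebra.
From mathcomp Require Import reals.
Set Implicit Arguments. Unset Strict Implicit. Unset Printing Implicit Defensive.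
Import Order.TTheory GRing.Theory Num.Theory.
Local Open Scope ring_scope.

Section Simplex.
Variables (R : realType) (d : nat).

Definition dotv (u v : 'rV[R]_d) : R := (u *m v^T) 0 0.
Definition dist2 (u v : 'rV[R]_d) : R := dotv (u - v) (u - v).

Definition aff_indep (n : nat) (A : 'I_n.+1 -> 'rV[R]_d) : Prop :=
  row_free (\matrix_(i < n) (A (lift ord0 i) - A ord0)).

Definition in_aff_hull (n : nat) (A : 'I_n.+1 -> 'rV[R]_d) (P : pred 'I_n.+1)
  (x : 'rV[R]_d) : Prop :=
  exists c : 'I_n.+1 -> R,
    [/\ forall i, ~~ P i -> c i = 0,
        \sum_i c i = 1 & x = \sum_i c i *: A i].

Definition in_conv_hull (n : nat) (A : 'I_n.+1 -> 'rV[R]_d) (P : pred 'I_n.+1)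
  (x : 'rV[R]_d) : Prop :=
  exists c : 'I_n.+1 -> R,
    [/\ forall i, ~~ P i -> c i = 0, forall i, 0 <= c i,
        \sum_i c i = 1 & x = \sum_i c i *: A i].

Definition simplex (n : nat) (A : 'I_n.+1 -> 'rV[R]_d) : Prop := aff_indep A.

(* S is an n-pre-kite: some facet (delete vertex k) is a regular (n-1)-simplex *)
Definition pre_kite (n : nat) (A : 'I_n.+1 -> 'rV[R]_d) : Prop :=
  simplex A /\
  exists k : 'I_n.+1, forall i j i' j' : 'I_n.+1,
    i != k -> j != k -> i' != k -> j' != k -> i != j -> i' != j' ->
    dist2 (A i) (A j) = dist2 (A i') (A j').

Definition regular_simplex (n : nat) (A : 'I_n.+1 -> 'rV[R]_d) : Prop :=
  forall i j i' j' : 'I_n.+1, i != j -> i' != j' ->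
    dist2 (A i) (A j) = dist2 (A i') (A j').

Definition is_circumcenter (n : nat) (A : 'I_n.+1 -> 'rV[R]_d) (O : 'rV[R]_d) : Prop :=
  in_aff_hull A predT O /\ exists r : R, forall i, dist2 (A i) O = r ^+ 2.

(* I is the incenter: center of a sphere (radius r > 0) in the affine hull touching
   every facet (the facet opposite vertex j) at a point of that facet's convex hull:
   the touching point lies on the sphere and in conv(facet), and the sphere does not
   cross the facet's affine hull (tangency). *)
Definition is_incenter (n : nat) (A : 'I_n.+1 -> 'rV[R]_d) (I : 'rV[R]_d) : Prop :=
  in_aff_hull A predT I /\
  exists r : R, 0 < r /\ forall j : 'I_n.+1,
    exists P : 'rV[R]_d,
      [/\ in_conv_hull A (predC1 j) P, dist2 P I = r ^+ 2 &
          forall x, in_aff_hull A (predC1 j) x -> r ^+ 2 <= dist2 x I].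

End Simplex.

(* Main.v *)
Require Import Defs.
From HB Require Import structures.
From mathcomp Require Import all_boot all_order all_algebra.
From mathcomp Require Import reals.
From mathcomp Require Import ring lra.
Set Implicit Arguments. Unset Strict Implicit. Unset Printing Implicit Defensive.
Import Order.TTheory GRing.Theory Num.Theory.
Local Open Scope ring_scope.

Section Dot.
Variables (R : realType) (d : nat).
Implicit Types (u v w : 'rV[R]_d).

Lemma dotvE u v : dotv u v = \sum_i u 0 i * v 0 i.
Proof. by rewrite /dotv !mxE; apply: eq_bigr => i _; rewrite mxE. Qed.

Lemma dotvC u v : dotv u v = dotv v u.
Proof. by rewrite !dotvE; apply: eq_bigr => i _; rewrite mulrC. Qed.

Lemma dotvDl u w v : dotv (u + w) v = dotv u v + dotv w v.
Proof. by rewrite !dotvE -big_split; apply: eq_bigr => i _; rewrite mxE mulrDl. Qed.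

Lemma dotvZl a u v : dotv (a *: u) v = a * dotv u v.
Proof. by rewrite !dotvE mulr_sumr; apply: eq_bigr => i _; rewrite mxE mulrA. Qed.

Lemma dotv0l v : dotv 0 v = 0.
Proof. by rewrite dotvE big1 // => i _; rewrite mxE mul0r. Qed.

Lemma dotvNl u v : dotv (- u) v = - dotv u v.
Proof. by rewrite -scaleN1r dotvZl mulN1r. Qed.

Lemma dotvBl u w v : dotv (u - w) v = dotv u v - dotv w v.
Proof. by rewrite dotvDl dotvNl. Qed.

Lemma dotvDr u w v : dotv v (u + w) = dotv v u + dotv v w.
Proof. by rewrite ![dotv v _]dotvC dotvDl. Qed.

Lemma dotvBr u w v : dotv v (u - w) = dotv v u - dotv v w.
Proof. by rewrite ![dotv v _]dotvC dotvBl. Qed.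

Lemma dotvZr a u v : dotv v (a *: u) = a * dotv v u.
Proof. by rewrite ![dotv v _]dotvC dotvZl. Qed.

Lemma dotv_suml (I : finType) (P : pred I) (F : I -> 'rV[R]_d) v :
  dotv (\sum_(i | P i) F i) v = \sum_(i | P i) dotv (F i) v.
Proof. exact: (big_morph (fun u => dotv u v) (fun a b => dotvDl a b v) (dotv0l v)). Qed.

Lemma dotv_ge0 u : 0 <= dotv u u.
Proof. by rewrite dotvE sumr_ge0 // => i _; rewrite -expr2 sqr_ge0. Qed.

Lemma dotv_eq0 u : dotv u u = 0 -> u = 0.
Proof.
rewrite dotvE => h; apply/rowP => j; rewrite mxE.
have H : forall i, true -> 0 <= u 0 i * u 0 i by move=> i _; rewrite -expr2 sqr_ge0.
by move/eqP: (psumr_eq0P H h (i:=j) isT); rewrite mulf_eq0 orbb => /eqP.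
Qed.
Lemma dotv_quad u w t : dotv (u + t *: w) (u + t *: w) =
  dotv u u + 2 * t * dotv u w + t ^+ 2 * dotv w w.
Proof. by rewrite dotvDl !dotvDr !dotvZl !dotvZr (dotvC w u); ring. Qed.
End Dot.

Section Core.
Variables (R : realType) (n : nat) (k : 'I_n.+1) (G : 'I_n.+1 -> 'I_n.+1 -> R)
  (al be rho : R).
Hypotheses (hn : (2 <= n)%N) (ha : 0 < al) (hGd : forall i, G i i = al + be)
  (hGo : forall i l, i != k -> l != k -> i != l -> G i l = be)
  (hGs : forall i l, G i l = G l i).

Definition D l := G k l - be.

Lemma sum_constC (x : R) : \sum_(l | l != k) x = n%:R * x.
Proof.
have h : \sum_(l : 'I_n.+1) x = x *+ n.+1 by rewrite sumr_const card_ord.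
rewrite (bigD1 k) //= mulrS in h.
by move/addrI: h => ->; rewrite mulr_natl.
Qed.

Lemma sum_quad (P : pred 'I_n.+1) (f : 'I_n.+1 -> R) x y z :
  \sum_(l | P l) (x + y * f l + z * f l ^+ 2) =
  x * \sum_(l | P l) 1 + y * \sum_(l | P l) f l + z * \sum_(l | P l) f l ^+ 2.
Proof.
rewrite !big_split /= -!mulr_sumr; congr (_ + _ + _).
by rewrite mulr_sumr; apply: eq_bigr => i _; rewrite mulr1.
Qed.

Lemma L1 c : \sum_i c i = 1 -> forall l, l != k ->
  \sum_m c m * G m l = be + al * c l + c k * D l.
Proof.
move=> hc l lk.
rewrite (bigD1 k) //= (bigD1 l) ?lk //=.
move: hc; rewrite (bigD1 k) //= (bigD1 l) ?lk //=.
move=> hc.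
have hX : \sum_(i | (i != k) && (i != l)) c i = 1 - c k - c l by rewrite -hc; ring.
have -> : \sum_(i | (i != k) && (i != l)) c i * G i l =
          (\sum_(i | (i != k) && (i != l)) c i) * be.
  by rewrite mulr_suml; apply: eq_bigr => i /andP[ik il]; rewrite hGo.
by rewrite hX hGd /D; ring.
Qed.

Lemma facetk : (exists c : 'I_n.+1 -> R, [/\ c k = 0, \sum_i c i = 1 &
   forall l, l != k -> \sum_m c m * G m l = rho]) -> n%:R * (rho - be) = al.
Proof.
move=> [c [ck hc hl]].
have e : forall l, l != k -> rho - be = al * c l.
  by move=> l lk; rewrite -(hl l lk) L1 // ck; ring.
have : \sum_(l | l != k) (rho - be) = \sum_(l | l != k) al * c l by apply: eq_bigr.
rewrite sum_constC -mulr_sumr => ->.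
by move: hc; rewrite (bigD1 k) //= ck add0r => ->; rewrite mulr1.
Qed.

Lemma facetj j c : j != k -> c j = 0 -> 0 <= c k -> \sum_i c i = 1 ->
  (forall l, l != j -> \sum_m c m * G m l = rho) -> n%:R * (rho - be) = al ->
  0 < al - \sum_(l | (l != k) && (l != j)) D l /\
  \sum_(l | (l != k) && (l != j)) D l ^+ 2 =
    2 * al * \sum_(l | (l != k) && (l != j)) D l - (\sum_(l | (l != k) && (l != j)) D l) ^+ 2.
Proof.
move=> jk cj ck0 hc hl hN.
set T := \sum_(l | (l != k) && (l != j)) D l.
set Q := \sum_(l | (l != k) && (l != j)) D l ^+ 2.
set ce := c k.
have hcnt : \sum_(l | (l != k) && (l != j)) (1:R) = n%:R - 1.
  have := sum_constC 1; rewrite (bigD1 j) ?jk //= mulr1 => h; apply: (addrI 1); rewrite h; ring.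
have hcs : \sum_(l | (l != k) && (l != j)) c l = 1 - ce.
  by move: hc; rewrite (bigD1 k) //= (bigD1 j) ?jk //= cj => <-; rewrite /ce; ring.
have hal : forall l, (l != k) && (l != j) -> al * c l = rho - be - ce * D l.
  by move=> l /andP[lk lj]; rewrite -(hl l lj) L1 // -/ce; ring.
have hk : rho = ce * (al + be) + \sum_(l | (l != k) && (l != j)) c l * (be + D l).
  rewrite -(hl k); last by rewrite eq_sym.
  rewrite (bigD1 k) //= (bigD1 j) ?jk //= cj hGd mul0r add0r; congr (_ + _).
  by apply: eq_bigr => l _; rewrite hGs /D; congr (_ * _); ring.
have eA : al * (1 - ce) = (rho - be) * (n%:R - 1) - ce * T.
  rewrite -hcs mulr_sumr (eq_bigr (fun l => (rho - be) + (- ce) * D l + 0 * D l ^+ 2)).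
    by rewrite sum_quad hcnt -/T; ring.
  by move=> l hl'; rewrite hal //; ring.
have eB : al * (rho - ce * (al + be)) =
   (rho - be) * be * (n%:R - 1) + ((rho - be) - ce * be) * T - ce * Q.
  have -> : rho - ce * (al + be) = \sum_(l | (l != k) && (l != j)) c l * (be + D l).
    by rewrite {1}hk; ring.
  rewrite mulr_sumr (eq_bigr (fun l => (rho - be) * be + ((rho - be) - ce * be) * D l
      + (- ce) * D l ^+ 2)).
    by rewrite sum_quad hcnt -/T -/Q; ring.
  by move=> l hl'; rewrite mulrA hal //; ring.
set N := n%:R in hN eA eB *.
set x := rho - be in hN eA eB *.
have h1 : al = N * ce * (al - T).
  have e := congr1 (fun z => N * z) eA; simpl in e.
  rewrite -hN in e *. lra.
have h2 : N * ce * (T ^+ 2 - 2 * al * T + Q) = 0.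
  have e := congr1 (fun z => N * z) eB; simpl in e.
  have e1 := congr1 (fun z => z * (al + be - T)) h1; simpl in e1.
  have hr : rho = be + x by rewrite /x; ring.
  rewrite hr in e. rewrite -hN in e e1 *. lra.
have hNce : N * ce != 0.
  apply/eqP => h0; move: h1; rewrite h0 mul0r => h3; move: ha; rewrite h3 ltxx //.
have hNce0 : 0 <= N * ce by rewrite mulr_ge0 // /N ler0n.
split.
  rewrite ltNge; apply/negP => hle.
  have := mulr_ge0_le0 hNce0 hle; rewrite -h1 => h4; move: ha; rewrite ltNge h4 //.
move/eqP: h2; rewrite mulf_eq0 (negbTE hNce) /= => /eqP h5.
lra.
Qed.

Lemma sumsq_le (P : pred 'I_n.+1) (f : 'I_n.+1 -> R) : (forall i, P i -> 0 <= f i) ->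
  \sum_(i | P i) f i ^+ 2 <= (\sum_(i | P i) f i) ^+ 2.
Proof.
move=> h; rewrite [X in _ <= X]expr2 mulr_suml; apply: ler_sum => i Pi.
rewrite expr2 ler_wpM2l ?h //.
rewrite (bigD1 i) //= lerDl sumr_ge0 // => l /andP[Pl _]; exact: h.
Qed.

Lemma core : (exists c : 'I_n.+1 -> R, [/\ c k = 0, \sum_i c i = 1 &
   forall l, l != k -> \sum_m c m * G m l = rho]) ->
  (forall j, j != k -> exists c : 'I_n.+1 -> R, [/\ c j = 0, 0 <= c k, \sum_i c i = 1 &
   forall l, l != j -> \sum_m c m * G m l = rho]) ->
  forall l, l != k -> D l = 0.
Proof.
move=> hk hj.
have hN := facetk hk.
set S := \sum_(l | l != k) D l.
set Qa := \sum_(l | l != k) D l ^+ 2.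
have hj' : forall j, j != k -> 0 < al - (S - D j) /\
    Qa - D j ^+ 2 = 2 * al * (S - D j) - (S - D j) ^+ 2.
  move=> j jk; have [c [cj ck hc hl]] := hj j jk.
  have [p1 p2] := facetj jk cj ck hc hl hN.
  have eT : S - D j = \sum_(l | (l != k) && (l != j)) D l by rewrite /S (bigD1 j) ?jk //=; ring.
  have eQ : Qa - D j ^+ 2 = \sum_(l | (l != k) && (l != j)) D l ^+ 2.
    by rewrite /Qa (bigD1 j) ?jk //=; ring.
  by rewrite eT eQ.
have n0 : (0 < n)%N by apply: leq_trans hn.
set j1 := lift k (Ordinal n0).
set j2 := lift k (Ordinal hn).
have j1k : j1 != k by rewrite eq_sym neq_lift.
have j2k : j2 != k by rewrite eq_sym neq_lift.
have j12 : j1 != j2 by rewrite /j1 /j2 (inj_eq (@lift_inj _ k)).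
have hN2 : (2 : R) <= n%:R by rewrite (ler_nat R 2 n).
have [eaS | neS] := eqVneq al S.
  have hpos : forall j, j != k -> 0 < D j.
    move=> j jk; have [h _] := hj' j jk; rewrite -eaS in h; lra.
  have [_ e1] := hj' j1 j1k.
  rewrite -eaS in e1.
  have eQS : Qa = al ^+ 2 by lra.
  set T1 := \sum_(l | (l != k) && (l != j1)) D l.
  set Q1 := \sum_(l | (l != k) && (l != j1)) D l ^+ 2.
  have eS1 : al = D j1 + T1 by rewrite eaS /S (bigD1 j1) ?j1k.
  have eQ1 : Qa = D j1 ^+ 2 + Q1 by rewrite /Qa (bigD1 j1) ?j1k.
  have hQ1 : Q1 <= T1 ^+ 2.
    by apply: sumsq_le => l /andP[lk _]; apply/ltW/hpos.
  have hT1 : D j2 <= T1.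
    rewrite /T1 (bigD1 j2) /=; last by rewrite j2k eq_sym.
    by rewrite lerDl sumr_ge0 // => l /andP[/andP[lk _] _]; apply/ltW/hpos.
  have := hpos j2 j2k; have := hpos j1 j1k => p1 p2.
  exfalso. nra.
set K := 2 * al * S - S ^+ 2 - Qa.
have hc : forall j, j != k -> D j = K / (2 * (al - S)).
  move=> j jk; have [_ e] := hj' j jk.
  have e' : K = 2 * (al - S) * D j by rewrite /K; lra.
  rewrite e'; field; rewrite subr_eq0; exact: neS.
set D0 := K / (2 * (al - S)).
have eS : S = n%:R * D0.
  by rewrite /S -sum_constC; apply: eq_bigr => l lk; exact: hc.
have eQ : Qa = n%:R * D0 ^+ 2.
  by rewrite /Qa -sum_constC; apply: eq_bigr => l lk; rewrite hc.
have [p1 e1] := hj' j1 j1k.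
rewrite eS eQ (hc j1 j1k) -/D0 in p1 e1.
have hD0 : D0 = 0.
  have e2 : (n%:R - 1) * (D0 * (n%:R * D0 - 2 * al)) = 0 by lra.
  move/eqP: e2; rewrite mulf_eq0 => /orP[/eqP h|]; first by lra.
  rewrite mulf_eq0 => /orP[/eqP //|/eqP h].
  have hh : n%:R * D0 = 2 * al by lra.
  have q1 : 0 < n%:R * (al - (n%:R * D0 - D0)) by apply: mulr_gt0 => //; lra.
  have q2 : n%:R * (al - (n%:R * D0 - D0)) = al * (2 - n%:R).
    have hh2 : n%:R * (n%:R * D0) = n%:R * (2 * al) by rewrite hh.
    lra.
  have q3 : al * (2 - n%:R) <= 0 by apply: mulr_ge0_le0; [exact: ltW ha | lra].
  lra.
by move=> l lk; rewrite hc // -/D0 hD0.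
Qed.
End Core.

Section Geo.
Variables (R : realType) (d : nat).

Lemma dist2C (u v : 'rV[R]_d) : dist2 u v = dist2 v u.
Proof. by rewrite /dist2 -opprB dotvNl dotvC dotvNl opprK. Qed.

Lemma dist2_expand (X a b : 'rV[R]_d) : dist2 a b =
  dotv (a - X) (a - X) + dotv (b - X) (b - X) - 2 * dotv (a - X) (b - X).
Proof.
have e : a - b = (a - X) - (b - X) by rewrite opprB addrA subrK.
rewrite /dist2 e; set x := a - X; set y := b - X.
clearbody x y; by rewrite dotvBl !dotvBr (dotvC y x); ring.
Qed.

Lemma quad0 (q s : R) : 0 <= s -> (forall t, 0 <= 2 * t * q + t ^+ 2 * s) -> q = 0.
Proof.
move=> hs h.
have hu : s + 1 != 0 by apply/lt0r_neq0; lra.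
set t := - q / (s + 1).
have tu : q = - (t * (s + 1)) by rewrite /t; field.
have := h t; rewrite tu => h'.
have ht : t ^+ 2 <= 0 by nra.
have ht0 : t ^+ 2 = 0 by apply/le_anti; rewrite ht sqr_ge0.
by move: ht0 => /eqP; rewrite sqrf_eq0 => /eqP ->; rewrite mul0r oppr0.
Qed.

Lemma sum_ind n (l : 'I_n.+1) (F : 'I_n.+1 -> 'rV[R]_d) :
  \sum_m (m == l)%:R *: F m = F l.
Proof.
rewrite (bigD1 l) //= eqxx scale1r big1 ?addr0 // => m /negbTE ->.
by rewrite scale0r.
Qed.

Lemma sum_indR n (l : 'I_n.+1) : \sum_m (m == l)%:R = 1 :> R.
Proof.
rewrite (bigD1 l) //= eqxx big1 ?addr0 // => m /negbTE ->. by [].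
Qed.

Lemma foot n (A : 'I_n.+1 -> 'rV[R]_d) X j (r : R) (c : 'I_n.+1 -> R) P :
  (forall i, ~~ predC1 j i -> c i = 0) -> \sum_i c i = 1 -> P = \sum_i c i *: A i ->
  dist2 P X = r ^+ 2 ->
  (forall x, in_aff_hull A (predC1 j) x -> r ^+ 2 <= dist2 x X) ->
  forall l, l != j -> dotv (P - X) (A l - X) = r ^+ 2.
Proof.
move=> hc0 hc1 hP hr hmin l lj.
set p := P - X. set w := A l - P.
have key : forall t, r ^+ 2 <= dist2 (P + t *: w) X.
  move=> t; apply: hmin.
  exists (fun m => c m + t * ((m == l)%:R - c m)); split.
  - move=> i /=; rewrite negbK => /eqP ->.
    rewrite hc0 /= ?eqxx // eq_sym (negbTE lj) subrr mulr0 addr0 //.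
  - by rewrite big_split /= -mulr_sumr sumrB hc1 sum_indR subrr mulr0 addr0.
  - rewrite (eq_bigr (fun m => c m *: A m + t *: ((m == l)%:R *: A m - c m *: A m))).
      by rewrite big_split /= -scaler_sumr sumrB sum_ind -hP.
    by move=> m _; rewrite scalerDl -scalerA scalerBl.
have hq : forall t, 0 <= 2 * t * dotv p w + t ^+ 2 * dotv w w.
  move=> t; have := key t; rewrite /dist2.
  have -> : P + t *: w - X = p + t *: w by rewrite /p addrAC.
  rewrite dotv_quad.
  move: hr; rewrite /dist2 -/p => ->; move=> h; lra.
have q0 := quad0 (dotv_ge0 w) hq.
have -> : A l - X = p + w by rewrite /p /w [RHS]addrC addrA subrK.
by rewrite dotvDr q0 addr0; move: hr; rewrite /dist2.
Qed.

Lemma sum_gram n (A : 'I_n.+1 -> 'rV[R]_d) X (c : 'I_n.+1 -> R) P l :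
  \sum_i c i = 1 -> P = \sum_i c i *: A i ->
  \sum_m c m * dotv (A m - X) (A l - X) = dotv (P - X) (A l - X).
Proof.
move=> hc hP.
have -> : P - X = \sum_m c m *: (A m - X).
  by rewrite (eq_bigr (fun m => c m *: A m - c m *: X)) ?sumrB -?scaler_suml ?hc ?scale1r -?hP //
     => m _; rewrite scalerBr.
by rewrite dotv_suml; apply: eq_bigr => m _; rewrite dotvZl.
Qed.

Lemma aff_inj n (A : 'I_n.+1 -> 'rV[R]_d) : aff_indep A -> forall i l, i != l -> A i != A l.
Proof.
move=> hA i l il; apply/eqP => eAl.
set M := \matrix_(i < n) (A (lift ord0 i) - A ord0).
have rowM m : row m M = A (lift ord0 m) - A ord0 by apply/rowP => q; rewrite !mxE.
have inj := row_free_inj hA.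
have key m1 m2 : row m1 M = row m2 M -> m1 = m2.
  rewrite !rowE => /inj h; have := congr1 (fun z : 'rV[R]_n => z 0 m1) h; rewrite !mxE !eqxx /=.
  by case: eqP => // _ /eqP; rewrite oner_eq0.
have key0 m : row m M != 0.
  apply/eqP; rewrite rowE -(mul0mx 1 M) => /inj h.
  by have := congr1 (fun z : 'rV[R]_n => z 0 m) h; rewrite !mxE !eqxx /= => /eqP; rewrite oner_eq0.
move: il eAl; case: (unliftP ord0 i) => [i'|] ->; case: (unliftP ord0 l) => [l'|] ->.
- move=> il e; move: il; rewrite (inj_eq (@lift_inj _ ord0)) => /eqP; apply.
  by apply: key; rewrite !rowM e.
- by move=> _ e; move: (key0 i'); rewrite rowM e subrr eqxx.
- by move=> _ e; move: (key0 l'); rewrite rowM -e subrr eqxx.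
- by rewrite eqxx.
Qed.
End Geo.

Unset Implicit Arguments.
Set Strict Implicit.

Theorem theorem6p3 (R : realType) (d n : nat) (A : 'I_n.+1 -> 'rV[R]_d) :
  (2 <= n)%N -> pre_kite A ->
  (forall X : 'rV[R]_d, is_circumcenter A X -> is_incenter A X -> regular_simplex A).
Proof.
move=> hn [hA [k hk]] X [_ [r0 hr0]] [_ [r [hr hinc]]].
set G := fun i l => dotv (A i - X) (A l - X).
have n0 : (0 < n)%N by apply: leq_trans hn.
set i0 := lift k (Ordinal n0).
set l0 := lift k (Ordinal hn).
have i0k : i0 != k by rewrite eq_sym neq_lift.
have l0k : l0 != k by rewrite eq_sym neq_lift.
have il0 : i0 != l0 by rewrite /i0 /l0 (inj_eq (@lift_inj _ k)).
set a2 := dist2 (A i0) (A l0).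
have ha2 : 0 < a2.
  rewrite lt_def dotv_ge0 andbT; apply/eqP => /dotv_eq0 /eqP.
  by rewrite subr_eq0 (negbTE (aff_inj hA il0)).
set al := a2 / 2.
set be := r0 ^+ 2 - al.
have ha : 0 < al by rewrite /al; lra.
have hGd : forall i, G i i = al + be by move=> i; rewrite /G -[dotv _ _]/(dist2 _ _) hr0 /be; ring.
have hGo : forall i l, i != k -> l != k -> i != l -> G i l = be.
  move=> i l ik lk il; have := hk i l i0 l0 ik lk i0k l0k il il0.
  rewrite -/a2 (dist2_expand X) -!/(dist2 _ _) !hr0 -/(G i l) => h.
  rewrite /be /al; lra.
have hGs : forall i l, G i l = G l i by move=> i l; rewrite /G dotvC.
have hfac : forall j, exists c : 'I_n.+1 -> R, [/\ c j = 0, 0 <= c k, \sum_i c i = 1 &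
   forall l, l != j -> \sum_m c m * G m l = r ^+ 2].
  move=> j; have [P [[c [hc0 hcp hc1 hP]] hPr hmin]] := hinc j.
  exists c; split => //.
  - by apply: hc0; rewrite /= eqxx.
  - move=> l lj; rewrite /G (sum_gram X l hc1 hP).
    exact: (foot hc0 hc1 hP hPr hmin lj).
have hk' : exists c : 'I_n.+1 -> R, [/\ c k = 0, \sum_i c i = 1 &
   forall l, l != k -> \sum_m c m * G m l = r ^+ 2].
  by have [c [? ? ? ?]] := hfac k; exists c.
have hj' : forall j, j != k -> exists c : 'I_n.+1 -> R, [/\ c j = 0, 0 <= c k, \sum_i c i = 1 &
   forall l, l != j -> \sum_m c m * G m l = r ^+ 2].
  by move=> j _; exact: hfac.
have hD := core hn ha hGd hGo hGs hk' hj'.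
have hkl : forall l, l != k -> dist2 (A k) (A l) = a2.
  move=> l lk; have := hD l lk; rewrite /D => h.
  rewrite (dist2_expand X) -!/(dist2 _ _) !hr0 -/(G k l).
  rewrite /be /al in h; lra.
have hall : forall i j, i != j -> dist2 (A i) (A j) = a2.
  move=> i j ij; have [ik | ik] := eqVneq i k.
    by rewrite ik hkl // -ik eq_sym.
  have [jk | jk] := eqVneq j k.
    by rewrite dist2C jk hkl // -jk.
  exact: hk.
by move=> i j i' j' ij ij'; rewrite !hall.
Qed.
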